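(* Let $I=\{1,\dots,m\}$, $J=\{1,\dots,n\}$, let $b\in\mathbb{R}^m$, let $\hat{x}\in\mathbb{R}^n$, and let $\Omega\subseteq\mathbb{R}^{m\times n}$ be a convex set. Consider the problem NLO-DG: \[ \min_{A,c,\pi}\ \sum_{j\in J}c_j\hat{x}_j-\sum_{i\in I}b_i\pi_i \] subject to $A\in\Omega$; $\sum_{j\in J}a_{ij}\hat{x}_j\ge b_i$ for all $i\in I$; $\sum_{i\in I}\pi_i=1$; $\sum_{i\in I}a_{ij}\pi_i=c_j$ for all $j\in J$; $\pi_i\ge 0$ for all $i\in I$. Here $A=(a_{ij})\in\mathbb{R}^{m\times n}$ with rows $a_i$, $c\in\mathbb{R}^n$, $\pi\in\mathbb{R}^m$. For each $i\in I$ let \[ t_i=\min_{A}\Big\{\sum_{j\in J}a_{ij}\hat{x}_j-b_i \;:\; A\in\Omega,\ A\hat{x}\ge b\Big\}, \] and let $A^{(i)}$ be an optimal solution of this problem. Let $i^*\in\arg\min_{i\in I}t_i$ and $A^*=A^{(i^* )}$ (with rows $a^*_i$). Then the optimal value of NLO-DG is $t_{i^*}$, and an optimal solution $(A,c,\pi)$ of NLO-DG is given by $a_i=a^*_i$ for all $i\in I$, $c=a^*_{i^*}$, $\pi=e_{i^*}$. Moreover, if for every $i\in I$ either $b_i>0$ or $a_i\neq 0$ for all $A\in\Omega\cap\{A: A\hat{x}\ge b\}$, then this solution satisfies $c\neq 0$ and $a_i\neq 0$ for all $i\in I$.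
   Context: $e_i$ denotes the $i$-th unit vector in $\mathbb{R}^m$. $a_i$ denotes the $i$-th row of a matrix $A$ (viewed as a vector in $\mathbb{R}^n$). *)

(* Defs.v *)
(* Vectors of R^k are row vectors 'rV[R]_k (entry v 0 j);
   A : 'M[R]_(m, n), its i-th row a_i is  row i A. *)
From HB Require Import structures.
From mathcomp Require Import all_boot all_order all_algebra.
Set Implicit Arguments. Unset Strict Implicit. Unset Printing Implicit Defensive.
Import Order.TTheory GRing.Theory Num.Theory.
Local Open Scope ring_scope.

Definition convex_mx (R : realFieldType) (m n : nat) (Omega : 'M[R]_(m, n) -> Prop) :=
  forall (A B : 'M[R]_(m, n)) (t : R), Omega A -> Omega B -> 0 <= t -> t <= 1 ->
    Omega (t *: A + (1 - t) *: B).

Definition feasA (R : realFieldType) (m n : nat) (Omega : 'M[R]_(m, n) -> Prop)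
  (b : 'rV[R]_m) (xhat : 'rV[R]_n) (A : 'M[R]_(m, n)) : Prop :=
  Omega A /\ forall i : 'I_m, \sum_(j < n) A i j * xhat 0 j >= b 0 i.

Definition slack (R : realFieldType) (m n : nat) (b : 'rV[R]_m) (xhat : 'rV[R]_n)
  (A : 'M[R]_(m, n)) (i : 'I_m) : R :=
  \sum_(j < n) A i j * xhat 0 j - b 0 i.

Definition nlo_feas (R : realFieldType) (m n : nat) (Omega : 'M[R]_(m, n) -> Prop)
  (b : 'rV[R]_m) (xhat : 'rV[R]_n) (A : 'M[R]_(m, n)) (c : 'rV[R]_n) (pi : 'rV[R]_m)
  : Prop :=
  [/\ feasA Omega b xhat A,
      \sum_(i < m) pi 0 i = 1,
      (forall j : 'I_n, \sum_(i < m) A i j * pi 0 i = c 0 j)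
    & (forall i : 'I_m, 0 <= pi 0 i)].

Definition nlo_obj (R : realFieldType) (m n : nat) (b : 'rV[R]_m) (xhat : 'rV[R]_n)
  (c : 'rV[R]_n) (pi : 'rV[R]_m) : R :=
  \sum_(j < n) c 0 j * xhat 0 j - \sum_(i < m) b 0 i * pi 0 i.

(* Main.v *)
Require Import Defs.
From HB Require Import structures.
From mathcomp Require Import all_boot all_order all_algebra.
Import Order.TTheory GRing.Theory Num.Theory.
Local Open Scope ring_scope.

Theorem theorem1 (R : realFieldType) (m n : nat)
  (b : 'rV[R]_m) (xhat : 'rV[R]_n) (Omega : 'M[R]_(m, n) -> Prop)
  (Ai : 'I_m -> 'M[R]_(m, n)) (istar : 'I_m) :
  convex_mx Omega ->
  (* A^(i) is an optimal solution of the i-th subproblem, t_i = slack (A^(i)) i *)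
  (forall i : 'I_m, feasA Omega b xhat (Ai i) /\
     forall A : 'M[R]_(m, n), feasA Omega b xhat A ->
       slack b xhat (Ai i) i <= slack b xhat A i) ->
  (* i* is an argmin of t_i *)
  (forall i : 'I_m, slack b xhat (Ai istar) istar <= slack b xhat (Ai i) i) ->
  let Astar := Ai istar in
  let tstar := slack b xhat Astar istar in
  [/\ nlo_feas Omega b xhat Astar (row istar Astar) (delta_mx 0 istar),
      nlo_obj b xhat (row istar Astar) (delta_mx 0 istar) = tstar,
      (forall (A : 'M[R]_(m, n)) (c : 'rV[R]_n) (pi : 'rV[R]_m),
         nlo_feas Omega b xhat A c pi -> tstar <= nlo_obj b xhat c pi)
    & ((forall i : 'I_m, 0 < b 0 i \/
          forall A : 'M[R]_(m, n), feasA Omega b xhat A -> row i A != 0) ->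
       row istar Astar != 0 /\ forall i : 'I_m, row i Astar != 0)].
Proof.
move=> _ Hopt Hmin Astar tstar.
have dE : forall i : 'I_m, (delta_mx 0 istar : 'rV[R]_m) 0 i = (i == istar)%:R.
  by move=> i; rewrite mxE eqxx.
have sumd : forall F : 'I_m -> R, \sum_(i < m) F i * (delta_mx 0 istar : 'rV[R]_m) 0 i = F istar.
  move=> F; rewrite (bigD1 istar) //= big1 ?addr0; first by rewrite dE eqxx mulr1.
  by move=> i /negbTE Hi; rewrite dE Hi mulr0.
have [HfA _] := Hopt istar.
split.
- split => //.
  + by rewrite -(sumd (fun _ => 1)) ; apply: eq_bigr => i _; rewrite mul1r.
  + by move=> j; rewrite sumd mxE.
  + by move=> i; rewrite dE ler0n.
- rewrite /nlo_obj /tstar /slack.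
  rewrite (eq_bigr (fun i => b 0 i * (delta_mx 0 istar : 'rV[R]_m) 0 i)) //.
  rewrite (sumd (fun i => b 0 i)); congr (_ - _).
  by apply: eq_bigr => j _; rewrite mxE.
- move=> A c pi [HA Hs Hc Hp].
  have -> : nlo_obj b xhat c pi = \sum_(i < m) pi 0 i * slack b xhat A i.
    rewrite /nlo_obj /slack.
    under eq_bigr => j _ do rewrite -Hc mulr_suml.
    rewrite exchange_big /= -sumrB; apply: eq_bigr => i _.
    rewrite mulrBr mulr_sumr mulrC; congr (_ - _).
    by apply: eq_bigr => j _; rewrite mulrCA mulrA.
  have -> : tstar = \sum_(i < m) pi 0 i * tstar by rewrite -mulr_suml Hs mul1r.
  apply: ler_sum => i _; apply: ler_wpM2l => //.
  apply: le_trans (Hmin i) _.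
  by have [_ H] := Hopt i; apply: H.
- move=> Hnz.
  have Hrow : forall i, row i Astar != 0.
    move=> i; case: (Hnz i) => [Hb | H]; last by apply: H.
    apply/negP => /eqP H0.
    have := (HfA.2 i).
    have -> : \sum_(j < n) Astar i j * xhat 0 j = 0.
      apply: big1 => j _.
      have := congr1 (fun M : 'rV[R]_n => M 0 j) H0.
      by rewrite /= !mxE => ->; rewrite mul0r.
    by rewrite leNgt Hb.
  by split.
Qed.
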